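(* For all positive integers $n,m$ with $m$ even, there is a deterministic query algorithm which, given an index $j\in[m]$ and query access to an input $x\in\Sigma^M$, makes $\tilde O(n+m)$ queries and accepts if and only if column $j$ is good for $x$, i.e., $g_{n,m}(x)=1$ and $j$ belongs to the set $G$ of condition (4') for $x$.
   Context: Let $n,m$ be positive integers with $m$ even, $M=[n]\times[m]$ (a grid of cells with $n$ rows and $m$ columns), $\tilde M = M\cup\{\bot\}$ (pointers to cells, $\bot$ is the null pointer). Let $T$ be the following fixed binary tree with $m$ leaves and $m-1$ internal nodes: if $m=2^k$, $T$ is the complete binary tree with $2^k$ leaves; if $2^k<m<2^{k+1}$, take the complete binary tree with $2^k$ leaves and add a pair of children to each of its $m-2^k$ leftmost leaves. Outgoing arcs of internal nodes are labeled 'left' and 'right', leaves are labeled $1,\dots,m$ from left to right, and $T(j)$ is the sequence of 'left'/'right' labels on the root-to-leaf-$j$ path. The input alphabet is $\Sigma=\{0,1\}\times\tilde M\times\tilde M\times\tilde M$; for $v\in\Sigma$ its components are $\mathrm{val}(v),\mathrm{lpoint}(v),\mathrm{rpoint}(v),\mathrm{bpoint}(v)$. The function $g_{n,m}\colon\Sigma^M\to\{0,1\}$ is defined by $g_{n,m}(x)=1$ iff: (1) there is exactly one column $b\in[m]$ with $\mathrm{val}(x_{i,b})=1$ for all $i\in[n]$ (the marked column); (2) in column $b$ there is a unique cell $a$ with $x_a\ne(1,\bot,\bot,\bot)$ (the special element); (3) for each column $j\in[m]\setminus\{b\}$, the path starting at $a$ and following $\mathrm{lpoint},\mathrm{rpoint}$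 as specified by $T(j)$ exists (no pointer on it is $\bot$) and ends in a cell $\ell_j$ in column $j$ with $\mathrm{val}(x_{\ell_j})=0$; (4') the set $G=\{j\in[m]\setminus\{b\} : \mathrm{bpoint}(x_{\ell_j})=a\}$ has size exactly $m/2$. A query returns the symbol $x_c\in\Sigma$ of one cell $c\in M$. $\tilde O$ hides factors polylogarithmic in $n,m$. *)

(* Defs.v *)
From mathcomp Require Import all_boot.
Set Implicit Arguments. Unset Strict Implicit. Unset Printing Implicit Defensive.

(* Rows [n] are 'I_n and columns [m] are 'I_m (0-indexed: column j here is
   column j+1 of the paper). A pointer in M~ = M ∪ {⊥} is an option cell,
   with None = ⊥. *)
Definition cell (n m : nat) := ('I_n * 'I_m)%type.
Definition ptr (n m : nat) := option (cell n m).
Definition Sigma (n m : nat) := (bool * ptr n m * ptr n m * ptr n m)%type.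

Definition valS {n m} (v : Sigma n m) : bool := v.1.1.1.
Definition lpoint {n m} (v : Sigma n m) : ptr n m := v.1.1.2.
Definition rpoint {n m} (v : Sigma n m) : ptr n m := v.1.2.
Definition bpoint {n m} (v : Sigma n m) : ptr n m := v.2.

Definition trivial_sym {n m} : Sigma n m := (true, None, None, None).

Definition input (n m : nat) := cell n m -> Sigma n m.

Inductive btree := BLeaf | BNode of btree & btree.

Fixpoint complete_tree (k : nat) : btree :=
  if k is k'.+1 then BNode (complete_tree k') (complete_tree k') else BLeaf.

(* add a pair of children to each of the r leftmost leaves (at most all
   leaves); returns the new tree and the number of splits not yet done *)
Fixpoint split_left (r : nat) (t : btree) : btree * nat :=
  match t with
  | BLeaf => if r is r'.+1 then (BNode BLeaf BLeaf, r') else (BLeaf, 0)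
  | BNode l rt =>
      let (l', r1) := split_left r l in
      let (rt', r2) := split_left r1 rt in (BNode l' rt', r2)
  end.

(* root-to-leaf label sequences, leaves listed left to right;
   false = 'left', true = 'right' *)
Fixpoint leaf_paths (t : btree) : seq (seq bool) :=
  match t with
  | BLeaf => [:: [::]]
  | BNode l r => map (cons false) (leaf_paths l) ++ map (cons true) (leaf_paths r)
  end.

(* T for m leaves: k = floor(log2 m), i.e. 2^k <= m < 2^(k+1) *)
Definition Ttree (m : nat) : btree :=
  let k := trunc_log 2 m in (split_left (m - 2 ^ k) (complete_tree k)).1.

(* T(j) for the leaf with (0-indexed) label j *)
Definition Tpath (m : nat) (j : nat) : seq bool := nth [::] (leaf_paths (Ttree m)) j.

Fixpoint follow {n m} (x : input n m) (a : cell n m) (p : seq bool) : ptr n m :=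
  match p with
  | [::] => Some a
  | b :: p' =>
      match (if b then rpoint (x a) else lpoint (x a)) with
      | None => None
      | Some c => follow x c p'
      end
  end.

Definition marked {n m} (x : input n m) (b : 'I_m) : Prop :=
  forall i : 'I_n, valS (x (i, b)) = true.

Definition Gset {n m} (x : input n m) (b : 'I_m) (a : cell n m) : {set 'I_m} :=
  [set j : 'I_m | (j != b) &&
     (match follow x a (Tpath m j) with
      | Some l => bpoint (x l) == Some a
      | None => false
      end)].

(* conditions (1),(2),(3),(4') with witnesses b (marked column) and a (special element) *)
Definition g_conds {n m} (x : input n m) (b : 'I_m) (a : cell n m) : Prop :=
  [/\ (forall b' : 'I_m, marked x b' <-> b' = b),
      a.2 = b /\ x a <> trivial_sym /\
        (forall i : 'I_n, x (i, b) <> trivial_sym -> i = a.1),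
      (forall j : 'I_m, j <> b ->
         exists l : cell n m, follow x a (Tpath m j) = Some l /\
                              l.2 = j /\ valS (x l) = false)
    & #|Gset x b a| = m %/ 2].

Definition g_is_one {n m} (x : input n m) : Prop :=
  exists (b : 'I_m) (a : cell n m), g_conds x b a.

Definition good_column {n m} (x : input n m) (j : 'I_m) : Prop :=
  exists (b : 'I_m) (a : cell n m), g_conds x b a /\ j \in Gset x b a.

Inductive qtree (Q A : Type) :=
  | QLeaf of bool
  | QNode of Q & (A -> qtree Q A).
Arguments QLeaf {Q A}.
Arguments QNode {Q A}.

Fixpoint qrun {Q A} (t : qtree Q A) (x : Q -> A) : bool :=
  match t with
  | QLeaf b => b
  | QNode q k => qrun (k (x q)) x
  end.

Fixpoint qcost {Q A} (t : qtree Q A) (x : Q -> A) : nat :=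
  match t with
  | QLeaf _ => 0
  | QNode q k => (qcost (k (x q)) x).+1
  end.

(* Main.v *)
Require Import Defs.
From mathcomp Require Import all_boot zify.
Set Implicit Arguments. Unset Strict Implicit. Unset Printing Implicit Defensive.

Inductive prog (Q A R : Type) : Type := Ret of R | Ask of Q & (A -> prog Q A R).
Arguments Ret {Q A R}. Arguments Ask {Q A R}.

Fixpoint bind {Q A R S} (p : prog Q A R) (f : R -> prog Q A S) : prog Q A S :=
  match p with Ret r => f r | Ask q k => Ask q (fun a => bind (k a) f) end.
Fixpoint run {Q A R} (p : prog Q A R) (x : Q -> A) : R :=
  match p with Ret r => r | Ask q k => run (k (x q)) x end.
Fixpoint cost {Q A R} (p : prog Q A R) (x : Q -> A) : nat :=
  match p with Ret r => 0 | Ask q k => (cost (k (x q)) x).+1 end.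
Fixpoint toq {Q A} (p : prog Q A bool) : qtree Q A :=
  match p with Ret b => QLeaf b | Ask q k => QNode q (fun a => toq (k a)) end.

Lemma run_bind Q A R S (p : prog Q A R) (f : R -> prog Q A S) x :
  run (bind p f) x = run (f (run p x)) x.
Proof. by elim: p => //= q k IH; rewrite IH. Qed.
Lemma cost_bind Q A R S (p : prog Q A R) (f : R -> prog Q A S) x :
  cost (bind p f) x = cost p x + cost (f (run p x)) x.
Proof. by elim: p => //= q k IH; rewrite IH. Qed.
Lemma toqE Q A (p : prog Q A bool) x : qrun (toq p) x = run p x /\ qcost (toq p) x = cost p x.
Proof. elim: p => //= q k IH; by case: (IH (x q)) => -> ->. Qed.

Fixpoint mapQ {Q A R T} (f : T -> prog Q A R) (s : seq T) : prog Q A (seq R) :=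
  match s with
  | [::] => Ret [::]
  | t :: s' => bind (f t) (fun r => bind (mapQ f s') (fun rs => Ret (r :: rs)))
  end.
Lemma run_mapQ Q A R T (f : T -> prog Q A R) s x :
  run (mapQ f s) x = map (fun t => run (f t) x) s.
Proof. by elim: s => //= t s IH; rewrite run_bind /= run_bind /= IH. Qed.
Lemma cost_mapQ Q A R T (f : T -> prog Q A R) s x K :
  (forall t, cost (f t) x <= K) -> cost (mapQ f s) x <= K * size s.
Proof.
move=> H; elim: s => //= t s IH; rewrite cost_bind /= cost_bind /= addn0 mulnS.
by apply: leq_add.
Qed.

Fixpoint foldP {Q A S T} (f : S -> T -> prog Q A S) (s0 : S) (s : seq T) : prog Q A S :=
  match s with
  | [::] => Ret s0
  | t :: s' => bind (f s0 t) (fun s1 => foldP f s1 s')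
  end.
Lemma run_foldP Q A S T (f : S -> T -> prog Q A S) s0 s x :
  run (foldP f s0 s) x = foldl (fun st t => run (f st t) x) s0 s.
Proof. by elim: s s0 => //= t s IH s0; rewrite run_bind IH. Qed.
Lemma cost_foldP Q A S T (f : S -> T -> prog Q A S) s0 s x K :
  (forall st t, cost (f st t) x <= K) -> cost (foldP f s0 s) x <= K * size s.
Proof.
move=> H; elim: s s0 => //= t s IH s0; rewrite cost_bind mulnS.
by apply: leq_add.
Qed.

Fixpoint height (t : btree) : nat :=
  match t with BLeaf => 0 | BNode l r => (maxn (height l) (height r)).+1 end.

Lemma leaf_paths_size t p : p \in leaf_paths t -> size p <= height t.
Proof.
elim: t p => [|l IHl r IHr] p /=; first by rewrite inE => /eqP ->.
rewrite mem_cat => /orP [] /mapP [q Hq ->] /=; rewrite ltnS.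
  by apply: leq_trans (IHl _ Hq) (leq_maxl _ _).
by apply: leq_trans (IHr _ Hq) (leq_maxr _ _).
Qed.

Lemma height_split r t : height (split_left r t).1 <= (height t).+1.
Proof.
elim: t r => [|l IHl rt IHr] r /=; first by case: r.
have := IHl r; case: (split_left r l) => l' r1 /= H1.
have := IHr r1; case: (split_left r1 rt) => rt' r2 /= H2.
rewrite ltnS geq_max; apply/andP; split.
  by apply: leq_trans H1 _; rewrite ltnS leq_maxl.
by apply: leq_trans H2 _; rewrite ltnS leq_maxr.
Qed.

Lemma height_complete k : height (complete_tree k) = k.
Proof. by elim: k => //= k ->; rewrite maxnn. Qed.

Lemma Tpath_size m j : size (Tpath m j) <= (trunc_log 2 m).+1.
Proof.
rewrite /Tpath /Ttree.
case: (ltnP j (size (leaf_paths (split_left (m - 2 ^ trunc_log 2 m) (complete_tree (trunc_log 2 m))).1))) => Hj.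
  apply: leq_trans (leaf_paths_size (mem_nth [::] Hj)) _.
  by apply: leq_trans (height_split _ _) _; rewrite height_complete.
by rewrite nth_default.
Qed.

Notation P n m R := (prog (cell n m) (Sigma n m) R).

Fixpoint followP {n m} (a : cell n m) (p : seq bool) {struct p} : P n m (ptr n m) :=
  match p with
  | [::] => Ret (Some a)
  | b :: p' => Ask a (fun v => match (if b then rpoint v else lpoint v) with
                               | None => Ret None | Some c => followP c p' end)
  end.

Lemma run_followP n m (x : input n m) a p : run (followP a p) x = follow x a p.
Proof.
elim: p a => //= b p IH a.
by case: b; [case: (rpoint (x a)) | case: (lpoint (x a))].
Qed.

Lemma cost_followP n m (x : input n m) a p : cost (followP a p) x <= size p.
Proof.
elim: p a => //= b p IH a.
by case: b; [case: (rpoint (x a)) | case: (lpoint (x a))].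
Qed.

Definition duel_f {n m} (x : input n m) (c a' : cell n m) : option (cell n m) :=
  if c == a' then Some c
  else if c.2 == a'.2 then (if x c == trivial_sym then Some a' else Some c)
  else match follow x c (Tpath m a'.2) with
       | None => Some a'
       | Some l => if (l.2 == a'.2) && ~~ valS (x l) then Some c else Some a'
       end.

Definition duelP {n m} (c a' : cell n m) : P n m (option (cell n m)) :=
  if c == a' then Ret (Some c)
  else if c.2 == a'.2 then Ask c (fun v => Ret (if v == trivial_sym then Some a' else Some c))
  else bind (followP c (Tpath m a'.2)) (fun r => match r with
       | None => Ret (Some a')
       | Some l => Ask l (fun v => Ret (if (l.2 == a'.2) && ~~ valS v then Some c else Some a'))
       end).

Lemma run_duelP n m (x : input n m) c a' : run (duelP c a') x = duel_f x c a'.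
Proof.
rewrite /duelP /duel_f; case: (c == a') => //; case: (c.2 == a'.2) => //.
by rewrite run_bind run_followP; case: (follow _ _ _).
Qed.

Lemma cost_duelP n m (x : input n m) c a' : cost (duelP c a') x <= (trunc_log 2 m).+2.
Proof.
rewrite /duelP; case: (c == a') => //; case: (c.2 == a'.2) => //.
rewrite cost_bind run_followP.
have H := leq_trans (cost_followP x c _) (Tpath_size m a'.2).
case: (follow _ _ _) => /= [l|]; rewrite ?addn0 ?addn1 //.
by apply: leq_trans H _.
Qed.

Definition step_f {n m} (x : input n m) (j : 'I_m) (st : option (cell n m)) (i : 'I_n) :=
  match bpoint (x (i, j)) with
  | None => st
  | Some a' => match st with None => Some a' | Some c => duel_f x c a' end
  end.

Definition stepP {n m} (j : 'I_m) (st : option (cell n m)) (i : 'I_n) : P n m (option (cell n m)) :=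
  Ask (i, j) (fun v => match bpoint v with
    | None => Ret st
    | Some a' => match st with None => Ret (Some a') | Some c => duelP c a' end
    end).

Lemma run_stepP n m (x : input n m) j st i : run (stepP j st i) x = step_f x j st i.
Proof.
rewrite /stepP /step_f /=; case: (bpoint _) => // a'; case: st => // c.
exact: run_duelP.
Qed.

Lemma cost_stepP n m (x : input n m) j st i : cost (stepP j st i) x <= (trunc_log 2 m).+3.
Proof.
rewrite /stepP /=; case: (bpoint _) => // a'; case: st => // c.
by rewrite ltnS cost_duelP.
Qed.

Definition c3 {n m} (x : input n m) (a : cell n m) (j' : 'I_m) : bool :=
  (j' == a.2) || match follow x a (Tpath m j') with
                 | Some l => (l.2 == j') && ~~ valS (x l) | None => false end.
Definition inG {n m} (x : input n m) (a : cell n m) (j' : 'I_m) : bool :=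
  (j' != a.2) && match follow x a (Tpath m j') with
                 | Some l => bpoint (x l) == Some a | None => false end.

Definition jinfoP {n m} (a : cell n m) (j' : 'I_m) : P n m (bool * bool) :=
  bind (followP a (Tpath m j')) (fun r => match r with
    | None => Ret (j' == a.2, false)
    | Some l => Ask l (fun v => Ret ((j' == a.2) || ((l.2 == j') && ~~ valS v),
                                     (j' != a.2) && (bpoint v == Some a)))
    end).

Lemma run_jinfoP n m (x : input n m) a j' : run (jinfoP a j') x = (c3 x a j', inG x a j').
Proof.
rewrite /jinfoP run_bind run_followP /c3 /inG.
by case: (follow _ _ _) => [l|] /=; rewrite ?orbF ?andbF.
Qed.

Lemma cost_jinfoP n m (x : input n m) a j' : cost (jinfoP a j') x <= (trunc_log 2 m).+2.
Proof.
rewrite /jinfoP cost_bind run_followP.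
have H := leq_trans (cost_followP x a _) (Tpath_size m j').
case: (follow _ _ _) => /= [l|]; rewrite ?addn0 ?addn1 //.
by apply: leq_trans H _.
Qed.

Definition colb {n m} (a : cell n m) (i : 'I_n) (v : Sigma n m) : bool :=
  valS v && ((v != trivial_sym) ==> (i == a.1)).

Definition colP {n m} (a : cell n m) (i : 'I_n) : P n m bool :=
  Ask (i, a.2) (fun v => Ret (colb a i v)).

Definition check_f {n m} (x : input n m) (a : cell n m) (j : 'I_m) : bool :=
  [&& x a != trivial_sym, all (fun i => colb a i (x (i, a.2))) (enum 'I_n),
      all (c3 x a) (enum 'I_m), count (inG x a) (enum 'I_m) == m %/ 2 & inG x a j].

Definition checkP {n m} (a : cell n m) (j : 'I_m) : P n m bool :=
  Ask a (fun va => bind (mapQ (colP a) (enum 'I_n)) (fun cs =>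
     bind (mapQ (jinfoP a) (enum 'I_m)) (fun js =>
     bind (jinfoP a j) (fun jj =>
     Ret [&& va != trivial_sym, all id cs, all fst js, count snd js == m %/ 2 & jj.2])))).

Lemma run_checkP n m (x : input n m) a j : run (checkP a j) x = check_f x a j.
Proof.
rewrite /checkP /= run_bind /= run_bind /= run_bind /= !run_mapQ run_jinfoP /=.
rewrite /check_f all_map count_map all_map.
congr [&& _, _, _, _ & _].
- by apply: eq_all => i /=; rewrite run_jinfoP.
- by congr (_ == _); apply: eq_count => i /=; rewrite run_jinfoP.
Qed.

Lemma cost_checkP n m (x : input n m) a j :
  cost (checkP a j) x <= 1 + n + m * (trunc_log 2 m).+2 + (trunc_log 2 m).+2.
Proof.
rewrite /checkP /= cost_bind /= cost_bind /= cost_bind /= addn0.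
have H1 : cost (mapQ (colP a) (enum 'I_n)) x <= 1 * size (enum 'I_n)
  by apply: cost_mapQ => i.
have H2 : cost (mapQ (jinfoP a) (enum 'I_m)) x <= (trunc_log 2 m).+2 * size (enum 'I_m)
  by apply: cost_mapQ => i; apply: cost_jinfoP.
have H3 := cost_jinfoP x a j.
rewrite size_enum_ord mul1n in H1; rewrite size_enum_ord in H2.
rewrite -addn1 (mulnC m); lia.
Qed.

Lemma card_count m (A : {set 'I_m}) : #|A| = count (mem A) (enum 'I_m).
Proof. by rewrite enumT cardE /enum_mem -size_filter. Qed.

Lemma inG_Gset n m (x : input n m) a j' : (j' \in Gset x a.2 a) = inG x a j'.
Proof. by rewrite inE. Qed.

Lemma g_conds_a2 n m (x : input n m) b a : g_conds x b a -> a.2 = b.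
Proof. by case=> _ [] . Qed.

Lemma check_correct n m (x : input n m) a j :
  check_f x a j <-> g_conds x a.2 a /\ j \in Gset x a.2 a.
Proof.
split.
- case/and5P => /eqP Ha /allP Hcol /allP Hc3 /eqP Hcnt HG.
  split; last by rewrite inG_Gset.
  split.
  + move=> b'; split; last first.
      by move=> -> i; have /andP[] := Hcol i (mem_enum _ _).
    move=> Hm; apply/eqP; apply/negPn/negP => Hb.
    have := Hc3 b' (mem_enum _ _); rewrite /c3 (negbTE Hb) /=.
    case: (follow _ _ _) => // [[l1 l2]] /andP [/eqP /= E].
    by rewrite E Hm.
  + split=> //; split=> // i Hi.
    have /andP[_ /implyP H] := Hcol i (mem_enum _ _).
    by apply/eqP; apply: H; apply/eqP.
  + move=> j' Hj'; have := Hc3 j' (mem_enum _ _).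
    rewrite /c3; have -> : (j' == a.2) = false by apply/eqP.
    case: (follow _ _ _) => // l /andP [/eqP E F]; exists l; split=> //; split=> //.
    by apply/negbTE.
  + by rewrite card_count -Hcnt; apply: eq_count => jj; exact: inG_Gset.
- case=> [[H1 [_ [Ha Hu]] H3 H4]] HG.
  apply/and5P; split.
  + by apply/eqP.
  + apply/allP => i _; rewrite /colb.
    have -> : valS (x (i, a.2)) by apply: (proj2 (H1 a.2)).
    by apply/implyP => /eqP /Hu ->.
  + apply/allP => j' _; rewrite /c3.
    case: eqP => //= /H3 [l [-> [-> ->]]].
    by rewrite eqxx.
  + by rewrite -H4 card_count; apply/eqP; apply: eq_count => jj; symmetry; exact: inG_Gset.
  + by rewrite -inG_Gset.
Qed.

Definition valid {n m} (x : input n m) (a : cell n m) := g_conds x a.2 a.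

Lemma duel1 n m (x : input n m) c a' : valid x c -> duel_f x c a' = Some c.
Proof.
case=> [H1 [_ [Ha Hu]] H3 H4]; rewrite /duel_f.
case: eqP => // _; case: eqP => [_|Hne].
  by case: eqP.
have [l [-> [E F]]] := H3 a'.2 (fun e => Hne (esym e)).
by rewrite E eqxx F.
Qed.

Lemma duel2 n m (x : input n m) c a' : valid x a' -> duel_f x c a' = Some a'.
Proof.
case=> [H1 [_ [Ha Hu]] H3 H4]; rewrite /duel_f.
case: eqP => [Ecc|Hca]; first by rewrite Ecc.
case: eqP => [E|Hne].
  case: eqP => // Hc; exfalso; apply: Hca.
  move: E Hc; case: c => c1 c2 /= -> Hc.
  by rewrite (Hu c1 Hc) -surjective_pairing.
case: (follow _ _ _) => // [[l1 l2]] /=.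
case: eqP => //= ->.
by rewrite (proj2 (H1 a'.2)).
Qed.

Definition champ {n m} (x : input n m) (j : 'I_m) :=
  foldl (step_f x j) None (enum 'I_n).

Lemma fold_inv n m (x : input n m) j a (i0 : 'I_n) :
  valid x a -> bpoint (x (i0, j)) = Some a ->
  forall s st, (st == Some a) || (i0 \in s) -> foldl (step_f x j) st s = Some a.
Proof.
move=> Hv Hrow; elim=> [|i s IH] st /=; first by rewrite orbF => /eqP.
move=> H; apply: IH.
case: (i =P i0) => [Ei|Hne].
  subst i; rewrite /step_f Hrow; case: st {H} => [c|] /=.
    by rewrite duel2 // eqxx.
  by rewrite eqxx.
case/orP: H => [/eqP -> | ].
  rewrite /step_f; case: (bpoint _) => [a'|]; last by rewrite eqxx.
  by rewrite duel1 // eqxx.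
rewrite in_cons => /orP [/eqP E|->]; last by rewrite orbT.
by case: Hne.
Qed.

Lemma champ_good n m (x : input n m) j b a :
  g_conds x b a -> j \in Gset x b a -> champ x j = Some a.
Proof.
move=> Hg; have E := g_conds_a2 Hg; subst b.
have Hv : valid x a by [].
rewrite inG_Gset /inG => /andP [Hjb].
case Hf: (follow _ _ _) => [l|] // /eqP Hbp.
have [l' [Hf' [Hl2 _]]] : exists l : cell n m, follow x a (Tpath m j) = Some l /\
  l.2 = j /\ valS (x l) = false.
  by case: Hg => _ _ H3 _; apply: H3; apply/eqP.
rewrite Hf in Hf'; case: Hf' => Hll; subst l'.
have Hrow : bpoint (x (l.1, j)) = Some a by rewrite -Hl2 -surjective_pairing.
apply: (fold_inv Hv Hrow).
by rewrite mem_enum orbT.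
Qed.

Lemma champ_some n m (x : input n m) j c :
  champ x j = Some c -> (check_f x c j <-> good_column x j).
Proof.
move=> Hc; rewrite check_correct; split.
  by case=> H1 H2; exists c.2, c.
case=> b [a [Hg HG]].
have Ha := champ_good Hg HG; rewrite Hc in Ha; case: Ha => Eca; subst c.
have E := g_conds_a2 Hg; subst b; by [].
Qed.

Lemma champ_none n m (x : input n m) j : champ x j = None -> ~ good_column x j.
Proof.
move=> Hc [b [a [Hg HG]]].
by rewrite (champ_good Hg HG) in Hc.
Qed.

Definition algP {n m} (j : 'I_m) : P n m bool :=
  bind (foldP (stepP j) None (enum 'I_n))
       (fun st => match st with None => Ret false | Some a => checkP a j end).

Lemma run_fold_champ n m (x : input n m) j :
  foldl (fun st t => run (stepP j st t) x) None (enum 'I_n) = champ x j.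
Proof.
rewrite /champ; elim: (enum 'I_n) (None : option (cell n m)) => // i s IH st.
have E : forall (T : Type) (F : T -> 'I_n -> T) st0, foldl F st0 (i :: s) = foldl F (F st0 i) s by [].
by rewrite !E run_stepP IH.
Qed.

Theorem lemma13 :
  exists C d : nat, forall n m : nat, 0 < n -> 0 < m -> ~~ odd m ->
    exists alg : 'I_m -> qtree (cell n m) (Sigma n m),
      forall (j : 'I_m) (x : input n m),
        (qrun (alg j) x = true <-> good_column x j) /\
        qcost (alg j) x <= C * (n + m) * (trunc_log 2 (n + m)).+1 ^ d.
Proof.
exists 10, 1 => n m Hn Hm _.
exists (fun j => toq (algP j)) => j x.
have [-> ->] := toqE (algP j) x.
split.
  rewrite /algP run_bind run_foldP run_fold_champ.
  case Hc: (champ x j) => [c|].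
    by rewrite run_checkP; apply: champ_some.
  by split=> // /(champ_none Hc).
rewrite /algP cost_bind run_foldP run_fold_champ.
have H1 : cost (foldP (stepP j) None (enum 'I_n)) x <= (trunc_log 2 m).+3 * size (enum 'I_n).
  by apply: cost_foldP => st t; apply: cost_stepP.
rewrite size_enum_ord in H1.
have H2 : cost (match champ x j with None => Ret false | Some a => checkP a j end) x
          <= 1 + n + m * (trunc_log 2 m).+2 + (trunc_log 2 m).+2.
  by case: (champ x j) => [c|] //; apply: cost_checkP.
have HL : trunc_log 2 m <= trunc_log 2 (n + m) by apply: leq_trunc_log; rewrite leq_addl.
move: H1 H2 HL; set L := trunc_log 2 m; set L' := trunc_log 2 (n + m).
set c1 := cost _ x; set c2 := cost _ x; rewrite expn1.
nia.
Qed.
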